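(* Let $X=(T,E)$ and $Y=(Z,F)$ be colored graphs and $W$ the fundamental magic biunitary of $A(X*Y)$. For each $\alpha\in Z$, the matrix $U^\alpha=(U^\alpha_{ij})_{i,j\in T}$ with $$U^\alpha_{ij}=\sum_{\beta\in Z}W_{i\alpha,j\beta}$$ is a magic biunitary.
   Context: A colored graph $X=(V,E)$ is a finite set $V$ with a partition $E=\{E_1,\dots,E_p\}$ of $(V\times V)-\Delta_V$. Free product: $X*Y$ has vertex set $T\times Z$ and partition $\{E_r^\circ\}\cup\{F_s^\circ\}$, $E_r^\circ=\{(i\alpha,j\alpha)\mid(i,j)\in E_r,\alpha\in Z\}$, $F_s^\circ=\{(i\alpha,j\beta)\mid i,j\in T,(\alpha,\beta)\in F_s\}$. A magic biunitary is a square matrix of projections whose rows and columns are partitions of unity. $A(X*Y)$ is the quotient of the universal C*-algebra generated by the entries of a $|T||Z|\times|T||Z|$ magic biunitary $W$ by the relations $Wd=dW$, $d$ the Laplacian of $X*Y$ ($d_{xx}=0$, $d_{xy}=c(k)$ for $(x,y)$ in the $k$-th class, $c$ injective into ${\mathbb C}$). *)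

(* Defs.v *)
From mathcomp Require Import all_boot all_algebra.
From mathcomp Require Import complex.
From mathcomp Require Import reals.
Set Implicit Arguments. Unset Strict Implicit. Unset Printing Implicit Defensive.
Import GRing.Theory Num.Theory.
Local Open Scope ring_scope.

(* A unital C*-algebra over the complex numbers C = R[i] (R the real numbers):
   a (unital, associative) C-algebra A with an involution [star] and a norm
   [nrm] (taking nonnegative, hence real, values in C) satisfying the usual
   axioms, the C*-identity, and completeness. *)
Record cstar_axioms (R : realType) (A : algType R[i])
    (star : A -> A) (nrm : A -> R[i]) : Prop := CstarAxioms {
  star_add : forall x y : A, star (x + y) = star x + star y;
  star_scale : forall (a : R[i]) (x : A), star (a *: x) = a^* *: star x;
  star_mul : forall x y : A, star (x * y) = star y * star x;
  star_invol : forall x : A, star (star x) = x;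
  nrm_ge0 : forall x : A, 0 <= nrm x;
  nrm_eq0 : forall x : A, nrm x = 0 -> x = 0;
  nrm_triangle : forall x y : A, nrm (x + y) <= nrm x + nrm y;
  nrm_scale : forall (a : R[i]) (x : A), nrm (a *: x) = `|a| * nrm x;
  nrm_submul : forall x y : A, nrm (x * y) <= nrm x * nrm y;
  nrm_cstar : forall x : A, nrm (star x * x) = nrm x ^+ 2;
  nrm_complete : forall u : nat -> A,
    (forall e : R[i], 0 < e -> exists N : nat, forall m n : nat,
        (N <= m)%N -> (N <= n)%N -> nrm (u m - u n) < e) ->
    exists l : A, forall e : R[i], 0 < e -> exists N : nat, forall n : nat,
        (N <= n)%N -> nrm (u n - l) < e
}.

Definition is_projection (A : ringType) (star : A -> A) (p : A) : Prop :=
  star p = p /\ p * p = p.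

Definition partition_of_unity (A : ringType) (star : A -> A) (I : finType)
    (p : I -> A) : Prop :=
  [/\ forall i, is_projection star (p i),
      forall i j, i != j -> p i * p j = 0
    & \sum_(i : I) p i = 1].

Definition magic_biunitary (A : ringType) (star : A -> A) (I : finType)
    (M : I -> I -> A) : Prop :=
  (forall i, partition_of_unity star (fun j => M i j)) /\
  (forall j, partition_of_unity star (fun i => M i j)).

(* Colored graph X = (V, E): the partition E of (V x V) - Delta_V is encoded
   by a coloring col : V -> V -> K (only off-diagonal values matter);
   the classes are the nonempty fibers of col on off-diagonal pairs. *)

(* Class of an off-diagonal pair in the free product X * Y (vertex set T x Z,
   vertex (i, alpha) written i alpha): E_r^o when alpha = beta (and then
   (i,j) in E_r), F_s^o when (alpha, beta) in F_s. *)
Definition free_prod_color (T Z KX KY : finType)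
    (colX : T -> T -> KX) (colY : Z -> Z -> KY) (x y : T * Z) : KX + KY :=
  if x.2 == y.2 then inl (colX x.1 y.1) else inr (colY x.2 y.2).

Definition laplacian (C : ringType) (V K : finType) (col : V -> V -> K)
    (c : K -> C) (x y : V) : C :=
  if x == y then 0 else c (col x y).

Definition commutes_with_scalar_matrix (C : comRingType) (A : algType C)
    (V : finType) (W : V -> V -> A) (d : V -> V -> C) : Prop :=
  forall x z : V,
    \sum_(y : V) W x y * (d y z)%:A = \sum_(y : V) (d x y)%:A * W y z.

(* Main.v *)
Require Import Defs.
From mathcomp Require Import all_boot all_algebra.
From mathcomp Require Import complex.
From mathcomp Require Import reals.
Import GRing.Theory Num.Theory.
Local Open Scope ring_scope.

Lemma row_mul (A : ringType) (star : A -> A) (I : finType) (M : I -> I -> A) :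
  magic_biunitary star M -> forall x a y, M x a * M x y = if y == a then M x a else 0.
Proof.
move=> [hr _] x a y; have [hp ho _] := hr x.
case: eqP => [->|/eqP ne]; first by have [_ ->] := hp a.
by apply: ho; rewrite eq_sym.
Qed.

Lemma col_mul (A : ringType) (star : A -> A) (I : finType) (M : I -> I -> A) :
  magic_biunitary star M -> forall y z b, M y z * M b z = if y == b then M b z else 0.
Proof.
move=> [_ hc] y z b; have [hp ho _] := hc z.
case: eqP => [->|/eqP ne]; first by have [_ ->] := hp b.
by apply: ho.
Qed.

Arguments row_mul {A star I M}.
Arguments col_mul {A star I M}.

Lemma sum_fib2 (V : nmodType) (T Z : finType) (F : T * Z -> V) (b : Z) :
  \sum_(y | y.2 == b) F y = \sum_(j : T) F (j, b).
Proof.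
rewrite big_mkcond.
have -> : \sum_y (if y.2 == b then F y else 0) =
   \sum_(j : T) \sum_(d : Z) (if d == b then F (j, d) else 0).
  by rewrite pair_big; apply: eq_bigr => -[j d].
apply: eq_bigr => j _.
rewrite (bigD1 b) //= eqxx big1 ?addr0 // => d /negbTE -> //.
Qed.

Lemma sum_pair (V : nmodType) (T Z : finType) (F : T * Z -> V) :
  \sum_y F y = \sum_(j : T) \sum_(b : Z) F (j, b).
Proof.
rewrite pair_big /=; by apply: eq_bigr => -[j d].
Qed.

Lemma star_sum (A : ringType) (star : A -> A) (I : finType) (F : I -> A) :
  (forall x y, star (x + y) = star x + star y) ->
  star (\sum_i F i) = \sum_i star (F i).
Proof.
move=> hadd.
have h0 : star 0 = 0.
  by apply: (addrI (star 0)); rewrite [RHS]addr0 -hadd addr0.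
by apply: (big_morph star hadd h0).
Qed.

Lemma cancel_sum (K : numFieldType) (V : lmodType K) (I : finType) (i0 : I) (x y : V) :
  \sum_(k : I) x = \sum_(k : I) y -> x = y.
Proof.
rewrite !sumr_const -!scaler_nat => e.
have hn : (#|I|%:R : K) != 0.
  by rewrite pnatr_eq0 -lt0n; apply/card_gt0P; exists i0.
by have := congr1 (fun v => (#|I|%:R)^-1 *: v) e; rewrite /= !scalerK.
Qed.

Lemma proj_eq (A : ringType) (star : A -> A) (p q : A) :
  (forall x y, star (x * y) = star y * star x) ->
  star p = p -> star q = q -> p = p * q -> q = q * p -> p = q.
Proof.
move=> hm sp sq h1 h2.
by rewrite -sp h1 hm sp sq -h2.
Qed.

Theorem lemma6p2 (R : realType) (T Z KX KY : finType)
    (colX : T -> T -> KX) (colY : Z -> Z -> KY)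
    (c : KX + KY -> R[i]) (hc : injective c)
    (A : algType R[i]) (star : A -> A) (nrm : A -> R[i])
    (hA : cstar_axioms star nrm)
    (W : T * Z -> T * Z -> A)
    (hW : magic_biunitary star W)
    (hWd : commutes_with_scalar_matrix W
             (laplacian (free_prod_color colX colY) c))
    (alpha : Z) :
  magic_biunitary star
    (fun i j : T => \sum_(beta : Z) W (i, alpha) (j, beta)).
Proof.
set d := laplacian (free_prod_color colX colY) c.
have key : forall x a b z, d a z != d x b -> W x a * W b z = 0.
  move=> x a b z hne.
  have h : \sum_y W x y * (d y z)%:A = \sum_y (d x y)%:A * W y z := hWd x z.
  have e1 : W x a * (\sum_y W x y * (d y z)%:A) * W b z = d a z *: (W x a * W b z).
    rewrite mulr_sumr mulr_suml (bigD1 a) //= big1 ?addr0.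
    - by rewrite mulrA (row_mul hW) eqxx mulr_algr -scalerAl.
    - by move=> y hy; rewrite mulrA (row_mul hW) (negbTE hy) mul0r mul0r.
  have e2 : W x a * (\sum_y (d x y)%:A * W y z) * W b z = d x b *: (W x a * W b z).
    rewrite mulr_sumr mulr_suml (bigD1 b) //= big1 ?addr0.
    - by rewrite -!mulrA (col_mul hW) eqxx mulrA mulr_algr -scalerAl.
    - by move=> y hy; rewrite -!mulrA (col_mul hW) (negbTE hy) !mulr0.
  have : (d a z - d x b) *: (W x a * W b z) = 0 by rewrite scalerBl -e1 -e2 h subrr.
  by move/eqP; rewrite scaler_eq0 subr_eq0 (negbTE hne) /= => /eqP.
have dinl : forall x y : T * Z, x.2 == y.2 -> x != y -> d x y = c (inl (colX x.1 y.1)).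
  by move=> x y h1 h2; rewrite /d /laplacian (negbTE h2) /free_prod_color h1.
have dinr : forall x y : T * Z, x.2 != y.2 -> d x y = c (inr (colY x.2 y.2)).
  move=> x y h1; have h2 : x != y by apply: contraNneq h1 => ->.
  by rewrite /d /laplacian /free_prod_color (negbTE h1) (negbTE h2).
have cne : forall u v, c (inl u) != c (inr v).
  by move=> u v; apply/eqP => /hc.
have cne' : forall u v, c (inr v) != c (inl u).
  by move=> u v; apply/eqP => /hc.
have hadd := star_add hA.
have hmul := star_mul hA.
have Wself : forall x y, star (W x y) = W x y.
  by move=> x y; have [hp _ _] := hW.1 x; have [] := hp y.
have pne : forall (i k : T) (g : Z), i != k -> (i, g) != (k, g).
  by move=> i k g hik; rewrite xpair_eqE eqxx andbT.
have z1 : forall i k j b l e, i != k -> b != e ->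
    W (i, alpha) (j, b) * W (k, alpha) (l, e) = 0.
  move=> i k j b l e hik hbe; apply: key.
  by rewrite dinr // dinl ?pne //; apply: cne'.
have z2 : forall i j k g l b, j != l -> g != alpha ->
    W (i, alpha) (j, b) * W (k, g) (l, b) = 0.
  move=> i j k g l b hjl hg; apply: key.
  by rewrite dinl ?pne // dinr 1?eq_sym //; apply: cne.
have selfsum : forall (I : finType) (F : I -> T * Z) (G : I -> T * Z),
    star (\sum_(u : I) W (F u) (G u)) = \sum_(u : I) W (F u) (G u).
  by move=> I F G; rewrite (@star_sum _ star _ _ hadd); apply: eq_bigr => u _; rewrite Wself.
have Vr_eq : forall b i k, \sum_j W (i, alpha) (j, b) = \sum_j W (k, alpha) (j, b).
  move=> b.
  have step : forall i k j, i != k ->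
      W (i, alpha) (j, b) = W (i, alpha) (j, b) * \sum_l W (k, alpha) (l, b).
    move=> i k j hik.
    have [_ _ hs] := hW.1 (k, alpha).
    rewrite -{1}[W _ _]mulr1 -hs [LHS]mulr_sumr (bigID (fun y => y.2 == b)) /=.
    rewrite [X in _ + X]big1 ?addr0; last first.
      by move=> [l e] /= he; apply: z1; rewrite // eq_sym.
    by rewrite sum_fib2 mulr_sumr.
  have hV : forall i k, i != k ->
      \sum_j W (i, alpha) (j, b) = (\sum_j W (i, alpha) (j, b)) * \sum_l W (k, alpha) (l, b).
    by move=> i k hik; rewrite mulr_suml; apply: eq_bigr => j _; apply: step.
  move=> i k; case: (eqVneq i k) => [-> //|hik].
  apply: (@proj_eq _ star _ _ hmul); rewrite ?selfsum //; [exact: hV | apply: hV; by rewrite eq_sym].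
have Vc_eq : forall b j l, \sum_i W (i, alpha) (j, b) = \sum_i W (i, alpha) (l, b).
  move=> b.
  have step : forall i j l, j != l ->
      W (i, alpha) (j, b) = W (i, alpha) (j, b) * \sum_k W (k, alpha) (l, b).
    move=> i j l hjl.
    have [_ _ hs] := hW.2 (l, b).
    rewrite -{1}[W _ _]mulr1 -hs [LHS]mulr_sumr (bigID (fun y => y.2 == alpha)) /=.
    rewrite [X in _ + X]big1 ?addr0; last first.
      by move=> [k g] /= hg; apply: z2.
    by rewrite sum_fib2 mulr_sumr.
  have hV : forall j l, j != l ->
      \sum_i W (i, alpha) (j, b) = (\sum_i W (i, alpha) (j, b)) * \sum_k W (k, alpha) (l, b).
    by move=> j l hjl; rewrite mulr_suml; apply: eq_bigr => i _; apply: step.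
  move=> j l; case: (eqVneq j l) => [-> //|hjl].
  apply: (@proj_eq _ star _ _ hmul); rewrite ?selfsum //; [exact: hV | apply: hV; by rewrite eq_sym].
have VC : forall b i j, \sum_l W (i, alpha) (l, b) = \sum_k W (k, alpha) (j, b).
  move=> b i j.
  have e : \sum_(k : T) \sum_(l : T) W (k, alpha) (l, b) =
           \sum_(l : T) \sum_(k : T) W (k, alpha) (l, b) by apply: exchange_big.
  rewrite (eq_bigr (fun _ => \sum_l W (i, alpha) (l, b))) in e; last by move=> k _; apply: Vr_eq.
  rewrite [RHS](eq_bigr (fun _ => \sum_k W (k, alpha) (j, b))) in e; last by move=> l _; apply: Vc_eq.
  by move: e; apply: cancel_sum.
have rowprod : forall i j k, (\sum_b W (i, alpha) (j, b)) * (\sum_g W (i, alpha) (k, g)) =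
    if k == j then \sum_b W (i, alpha) (j, b) else 0.
  move=> i j k; rewrite mulr_suml; case: (eqVneq k j) => [->|hkj].
    apply: eq_bigr => b _; rewrite mulr_sumr (bigD1 b) //= big1 ?addr0.
      by rewrite (row_mul hW) eqxx.
    by move=> g hg; rewrite (row_mul hW) xpair_eqE (negbTE hg) andbF.
  apply: big1 => b _; rewrite mulr_sumr; apply: big1 => g _.
  by rewrite (row_mul hW) xpair_eqE (negbTE hkj).
split.
  move=> i; split.
  - by move=> j; split; [rewrite selfsum | rewrite rowprod eqxx].
  - by move=> j k hjk; rewrite rowprod eq_sym (negbTE hjk).
  - by rewrite -sum_pair; have [_ _ ->] := hW.1 (i, alpha).
move=> j; split.
- by move=> i; split; [rewrite selfsum | rewrite rowprod eqxx].
- move=> i k hik; rewrite mulr_suml; apply: big1 => b _; rewrite mulr_sumr.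
  apply: big1 => g _; case: (eqVneq b g) => [<-|hbg].
    by rewrite (col_mul hW) (negbTE (pne _ _ _ hik)).
  exact: z1.
- rewrite exchange_big /= (eq_bigr (fun b => \sum_l W (j, alpha) (l, b))).
    by rewrite -exchange_big -sum_pair; have [_ _ ->] := hW.1 (j, alpha).
  by move=> b _; rewrite (VC b j j).
Qed.
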